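(* Let $\Phi$ be a $(3,3)$-monotone formula with $n$ clauses and $n$ variables, and let $G_\Phi$ be the graph constructed from it as described in the context. Then the complement $\overline{G_\Phi}$ has no fall colouring using more than $\frac{7}{3}n$ colours.
   Context: A $(3,3)$-monotone formula is a set $C$ of clauses over a variable set $X$, where each clause consists of three distinct (positive, unnegated) variables and each variable occurs in exactly three clauses, so $|C|=|X|=n$. The graph $G_\Phi$ has $5n$ vertices: for each clause $c\in C$ with variables $x,y,z$ (in an arbitrary fixed order) there are vertices $c(x),c(y),c(z)$ ($c$-type) and $a_1^c,a_2^c$ ($a$-type) forming the path $c(x)\,a_1^c\,c(y)\,a_2^c\,c(z)$; and for each variable $x$ occurring in clauses $c,c',c''$, the three vertices $c(x),c'(x),c''(x)$ form a triangle. There are no other edges. A colouring of a graph is a map to $\mathbb{Z}^+$ with adjacent vertices receiving distinct colours; a fall colouring is a colouring in which every vertex is adjacent to a vertex of every colour used other than its own. $\overline{G}$ denotes the complement of $G$. *)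

(* Defs.v *)
From mathcomp Require Import all_boot.
Set Implicit Arguments. Unset Strict Implicit. Unset Printing Implicit Defensive.

Section Graphs.
Variable V : finType.

Definition complement (e : rel V) : rel V := fun u v => (u != v) && ~~ e u v.

Definition is_colouring (e : rel V) (f : V -> nat) : Prop :=
  (forall v, 0 < f v) /\ (forall u v, e u v -> f u != f v).

Definition colours_used (f : V -> nat) : seq nat := undup (codom f).
Definition ncolours (f : V -> nat) : nat := size (colours_used f).

Definition is_fall_colouring (e : rel V) (f : V -> nat) : Prop :=
  is_colouring e f /\
  (forall v k, k \in codom f -> k != f v -> exists u, e v u && (f u == k)).
End Graphs.

(* Clauses C, variables X; clause c has variables cl c 0, cl c 1, cl c 2 (in this fixed
   order, pairwise distinct); each variable occurs in exactly three clauses. *)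
Definition monotone33 (C X : finType) (cl : C -> 'I_3 -> X) : Prop :=
  (forall c, injective (cl c)) /\
  (forall x : X, #|[set c : C | x \in codom (cl c)]| = 3).

(* Vertices of G_Phi: inl (c,i) is the c-type vertex c(cl c i);
   inr (c,false) is a_1^c, inr (c,true) is a_2^c. *)
Definition GVert (C : finType) : finType := ((C * 'I_3) + (C * bool))%type.

(* path c(x) a1 c(y) a2 c(z): a1 ~ positions 0,1; a2 ~ positions 1,2 *)
Definition path_adj (C : finType) (c : C) (i : 'I_3) (c' : C) (b : bool) : bool :=
  (c == c') && (if b then (val i == 1) || (val i == 2) else (val i == 0) || (val i == 1)).

Definition G_edge (C X : finType) (cl : C -> 'I_3 -> X) : rel (GVert C) :=
  fun u v =>
    match u, v with
    | inl (c, i), inl (c', j) => (c != c') && (cl c i == cl c' j)   (* variable triangles *)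
    | inl (c, i), inr (c', b) => path_adj c i c' b
    | inr (c', b), inl (c, i) => path_adj c i c' b
    | inr _, inr _ => false
    end.

(* Main.v *)
Require Import Defs.
From mathcomp Require Import all_boot zify.
Set Implicit Arguments. Unset Strict Implicit.

Lemma part_sum (T : finType) (g : T -> nat) (s : seq nat) : uniq s ->
  \sum_(j <- s) #|[set x | g x == j]| = #|[set x | g x \in s]|.
Proof.
elim: s => [|j s IH] /=.
  rewrite big_nil; symmetry; apply/eqP; rewrite cards_eq0; apply/eqP/setP=> x; by rewrite !inE.
case/andP=> js us; rewrite big_cons IH //.
have -> : [set x | g x \in j :: s] = [set x | g x == j] :|: [set x | g x \in s].
  by apply/setP=> x; rewrite !inE.
rewrite cardsU; suff -> : [set x | g x == j] :&: [set x | g x \in s] = set0 by rewrite cards0 subn0.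
apply/setP=> x; rewrite !inE; apply/negP=> /andP[/eqP -> ]; by rewrite (negbTE js).
Qed.

Lemma sum_if (s : seq nat) (p : pred nat) :
  \sum_(j <- s) (if p j then 1 else 3) + 2 * count p s = 3 * size s.
Proof.
elim: s => [|j s IH] /=; first by rewrite big_nil.
rewrite big_cons; case: (p j) => /=; lia.
Qed.

Lemma G_sym (C X : finType) (cl : C -> 'I_3 -> X) u v : G_edge cl u v = G_edge cl v u.
Proof.
case: u => [[c i]|[c b]]; case: v => [[c' j]|[c' b']] //=.
by rewrite eq_sym [cl c i == _]eq_sym.
Qed.

Lemma same_adj (C X : finType) (cl : C -> 'I_3 -> X) f
  (Hf : is_fall_colouring (complement (G_edge cl)) f) u w :
  f u = f w -> u != w -> G_edge cl u w.
Proof.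
case: Hf => [[_ Hp] _] fe uw; apply/negPn/negP => nG.
by move: (Hp u w); rewrite /complement uw nG fe eqxx => /(_ isT).
Qed.

Lemma L (C X : finType) (cl : C -> 'I_3 -> X) f
  (Hf : is_fall_colouring (complement (G_edge cl)) f) w v :
  G_edge cl w v -> f v != f w ->
  exists u, [/\ f u = f w, u != w, G_edge cl u w, u != v & ~~ G_edge cl v u].
Proof.
move=> Gwv fvw; have Hf' := Hf; case: Hf' => _ Hfall.
case: (Hfall v (f w) (codom_f f w) (ltac:(by rewrite eq_sym))) => u /andP[/andP[vu nG] /eqP fu].
have uw : u != w by apply: contraNneq nG => ->; rewrite G_sym.
exists u; split => //; first exact: (same_adj Hf fu uw).
by rewrite eq_sym.
Qed.

Lemma has_c (C X : finType) (cl : C -> 'I_3 -> X) f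
  (Hf : is_fall_colouring (complement (G_edge cl)) f) w :
  exists p, f (inl p) = f w.
Proof.
case: w => [p|[c b]]; first by exists p.
set v : GVert C := inl (c, Ordinal (isT : 1 < 3)).
have Gwv : G_edge cl (inr (c, b)) v by rewrite /= /path_adj eqxx; case: b.
case: (eqVneq (f v) (f (inr (c, b)))) => [e|ne]; first by exists (c, Ordinal (isT : 1 < 3)).
case: (L Hf Gwv ne) => [[p|[c' b']] [fu _ Guw _ _]] //; by exists p.
Qed.

Lemma three_le (C : finType) (f : GVert C -> nat) j p1 p2 p3 :
  f (inl p1) = j -> f (inl p2) = j -> f (inl p3) = j ->
  p1 != p2 -> p1 != p3 -> p2 != p3 ->
  3 <= #|[set p | f (inl p) == j]|.
Proof.
move=> h1 h2 h3 n12 n13 n23.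
have : uniq [:: p1; p2; p3] by rewrite /= !inE !negb_or n12 n13 n23.
move/card_uniqP => hc; apply: (@leq_trans #|[:: p1; p2; p3]|); first by rewrite hc.
apply: subset_leq_card; apply/subsetP => x.
by rewrite !inE => /or3P[] /eqP ->; apply/eqP.
Qed.

Lemma three (C X : finType) (cl : C -> 'I_3 -> X) f
  (Hphi : monotone33 cl)
  (Hf : is_fall_colouring (complement (G_edge cl)) f) w :
  (forall b, f (inr b) != f w) -> 3 <= #|[set p | f (inl p) == f w]|.
Proof.
move=> noa; case: w noa => [[c i]|b] noa; last by move: (noa b); rewrite eqxx.
set v : GVert C := inr (c, val i == 2).
have Gwv : G_edge cl (inl (c, i)) v.
  rewrite /= /path_adj eqxx /=.
  have gen : forall k : nat, k < 3 -> if k == 2 then (k == 1) || (k == 2) else (k == 0) || (k == 1) by case=> [|[|[|?]]].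
  exact: gen (ltn_ord i).
case: (L Hf Gwv (noa _)) => [[[c1 i1]|b1] [fu u1w Guw _ _]]; last by move: (noa b1); rewrite fu eqxx.
move: Guw => /= /andP[c1c /eqP x1].
set x := cl c i.
have [_ Hcard] := Hphi; have Sx := Hcard x.
set S := [set d : C | x \in codom (cl d)] in Sx.
have cS : c \in S by rewrite inE; apply/codomP; exists i.
have c1S : c1 \in S by rewrite inE; apply/codomP; exists i1.
have : #|S :\ c :\ c1| = 1.
  move: Sx; rewrite (cardsD1 c) cS (cardsD1 c1 (S :\ c)) in_setD1 c1c c1S /=; lia.
move=> h; have : 0 < #|S :\ c :\ c1| by rewrite h.
case/card_gt0P => c2; rewrite !inE => /and3P[c21 c2c /codomP[i2 x2]].
set v2 : GVert C := inl (c2, i2).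
have Gv2w : G_edge cl (inl (c, i)) v2 by rewrite /= eq_sym c2c -x2 eqxx.
have Gv2u : G_edge cl (inl (c1, i1)) v2 by rewrite /= eq_sym c21 -x2 x1 eqxx.
have ne1 : (c, i) != (c1, i1) by apply: contraNneq c1c => [[-> _]].
case: (eqVneq (f v2) (f (inl (c, i)))) => [e|ne].
  apply: (three_le (p1 := (c, i)) (p2 := (c1, i1)) (p3 := (c2, i2))) => //.
  - by apply: contraNneq c2c => [[-> _]].
  - by apply: contraNneq c21 => [[-> _]].
case: (L Hf Gv2w ne) => [[[c3 i3]|b3] [fu3 u3w _ u3v nG]]; last by move: (noa b3); rewrite fu3 eqxx.
apply: (three_le (p1 := (c, i)) (p2 := (c1, i1)) (p3 := (c3, i3))) => //.
- by apply: contraNneq u3w => ->.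
- apply: contraNneq nG => e; rewrite -e G_sym; exact: Gv2u.
Qed.

Theorem mainTheorem19 (C X : finType) (n : nat) (cl : C -> 'I_3 -> X)
  (Hphi : monotone33 cl) (HC : #|C| = n) (HX : #|X| = n)
  (f : GVert C -> nat) (Hf : is_fall_colouring (complement (G_edge cl)) f) :
  3 * ncolours f <= 7 * n.
Proof.
set s := colours_used f.
have us : uniq s := undup_uniq _.
have ins : forall w, f w \in s by move=> w; rewrite mem_undup codom_f.
have sinv : forall j, j \in s -> exists w, f w = j.
  by move=> j; rewrite mem_undup => /codomP[w ->]; exists w.
pose pa j := [exists b : C * bool, f (inr b) == j].
have Hsum := part_sum (fun p : C * 'I_3 => f (inl p)) us.
have E : [set x : C * 'I_3 | f (inl x) \in s] = setT by apply/setP=> x; rewrite !inE ins.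
rewrite E cardsT card_prod card_ord HC in Hsum.
have Hle : \sum_(j <- s) (if pa j then 1 else 3) <= \sum_(j <- s) #|[set x : C * 'I_3 | f (inl x) == j]|.
  rewrite big_seq_cond [X in _ <= X]big_seq_cond; apply: leq_sum => j /andP[js _].
  case: (sinv j js) => w <-.
  case: (boolP (pa (f w))) => [_|npa].
    by case: (has_c Hf w) => p <-; rewrite card_gt0; apply/set0Pn; exists p; rewrite inE.
  apply: (three Hphi Hf) => b; apply: contraNneq npa => e; apply/existsP; exists b; rewrite e.
  by [].
have Hcnt : count pa s <= 2 * n.
  rewrite -size_filter.
  have -> : 2 * n = size [seq f (inr b) | b <- enum (predT : pred (C * bool))].
    by rewrite size_map -cardE card_prod HC card_bool mulnC.
  apply: uniq_leq_size; first exact: filter_uniq.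
  move=> j; rewrite mem_filter => /andP[/existsP[b /eqP <-] _].
  by apply/mapP; exists b; rewrite ?mem_enum.
have := sum_if s pa; rewrite /ncolours -/s => h; rewrite Hsum in Hle; rewrite -h; apply: leq_trans (leq_add Hle (leq_mul (leqnn 2) Hcnt)) _; lia.
Qed.
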